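(* Let $n\ge 2$ and let $v_1,\ldots,v_n$ be positive integers all less than or equal to $1.5n+1$. Then one of the following holds: $\mathrm{ML}(v_1,\ldots,v_n)<\frac{1}{n+1}$; or $\mathrm{ML}(v_1,\ldots,v_n)=\frac{s}{ns+1}$ for some integer $1\le s\le 3$; or $\mathrm{ML}(v_1,\ldots,v_n)\ge\frac1n$.
   Context: For a real number $x$, $\Vert x\Vert$ denotes the distance from $x$ to the nearest integer. For positive integers $v_1,\ldots,v_n$, the maximum loneliness is $\mathrm{ML}(v_1,\ldots,v_n)=\max_{t\in\mathbb{R}}\min_{1\le i\le n}\Vert t v_i\Vert$. *)

(* Defs.v *)
From HB Require Import structures.
From mathcomp Require Import all_boot all_order all_algebra.
From mathcomp Require Import all_classical all_reals.
Set Implicit Arguments. Unset Strict Implicit. Unset Printing Implicit Defensive.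
Import Order.TTheory GRing.Theory Num.Theory.
Local Open Scope ring_scope.
Local Open Scope classical_set_scope.

Definition dist_int {R : realType} (x : R) : R :=
  Num.min (x - (Num.floor x)%:~R) ((Num.ceil x)%:~R - x).

(* min_{1<=i<=n} ||t v_i||  (the neutral element 1 is never reached since n>=1
   and ||.|| <= 1/2) *)
Definition min_dist {R : realType} (n : nat) (v : 'I_n -> nat) (t : R) : R :=
  \big[Num.min/1]_(i < n) dist_int (t * (v i)%:R).

(* ML(v_1,...,v_n) = max_t min_i ||t v_i||, written as the supremum over t
   (the maximum is attained, so the two coincide). *)
Definition ML {R : realType} (n : nat) (v : 'I_n -> nat) : R :=
  sup (range (@min_dist R n v)).

(* Main.v *)
Require Import Defs.
From HB Require Import structures.
From mathcomp Require Import all_boot all_order all_algebra.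
From mathcomp Require Import all_classical all_reals.
From mathcomp Require Import topology normedtype derive.
From mathcomp Require Import zify ring lra.
Import Order.TTheory GRing.Theory Num.Theory.
Import numFieldNormedType.Exports.
Local Open Scope ring_scope.

Lemma dist_int_le {R : realType} (x : R) (z : int) : dist_int x <= `|x - z%:~R|.
Proof.
rewrite /dist_int.
have hf := floor_le x; have hc := ceil_ge x.
have hcf : Num.ceil x <= Num.floor x + 1.
  by rewrite ceil_floor lerD2l; case: (x \is a Num.int).
case: (leP z (Num.floor x)) => hz.
- have : (z%:~R : R) <= (Num.floor x)%:~R by rewrite ler_int.
  move=> h; rewrite ge_min; apply/orP; left.
  rewrite ger0_norm; [lra | lra].
- have : (Num.ceil x) <= z by lia.
  rewrite -(ler_int R) => h; rewrite ge_min; apply/orP; right.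
  rewrite ler0_norm; [lra | lra].
Qed.

Lemma dist_int_eq {R : realType} (x : R) : exists z : int, dist_int x = `|x - z%:~R|.
Proof.
rewrite /dist_int.
have hf := floor_le x; have hc := ceil_ge x.
case: (leP (x - (Num.floor x)%:~R) ((Num.ceil x)%:~R - x)) => h.
- exists (Num.floor x). rewrite ger0_norm //; lra.
- exists (Num.ceil x); idtac.
  rewrite ler0_norm; lra.
Qed.

Lemma dist_int_lip {R : realType} (x y : R) : dist_int y <= dist_int x + `|x - y|.
Proof.
have [z ->] := dist_int_eq x.
apply: (le_trans (dist_int_le y z)).
have := ler_normD (x - z%:~R) (y - x).
have -> : x - z%:~R + (y - x) = y - z%:~R by ring.
by rewrite (distrC y x).
Qed.

Lemma dist_int_lip2 {R : realType} (x y : R) : `|dist_int x - dist_int y| <= `|x - y|.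
Proof.
have h1 := dist_int_lip x y; have h2 := dist_int_lip y x.
rewrite (distrC y x) in h2.
rewrite ler_norml; apply/andP; split; lra.
Qed.

Lemma dist_int_near {R : realType} (y : R) (z : int) :
  `|y - z%:~R| <= 1/2 -> dist_int y = `|y - z%:~R|.
Proof.
move=> hy; apply/eqP; rewrite eq_le dist_int_le /=.
have [w ->] := dist_int_eq y.
have [->|hwz] := eqVneq w z; first by [].
have h1 : (1 : R) <= `|(z - w)%:~R|.
  rewrite -intr_norm; rewrite (ler_int R 1).
  have : (z - w != 0) by rewrite subr_eq0 eq_sym.
  lia.
have := ler_normD (y - w%:~R) (- (y - z%:~R)).
rewrite normrN.
have -> : y - w%:~R + - (y - z%:~R) = (z - w)%:~R by rewrite intrB; ring.
lra.
Qed.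

Lemma dist_int_shift {R : realType} (x : R) (z : int) : dist_int (x + z%:~R) = dist_int x.
Proof.
apply/eqP; rewrite eq_le; apply/andP; split.
- have [w ->] := dist_int_eq x.
  have := dist_int_le (x + z%:~R) (w + z).
  by rewrite intrD; have -> : x + z%:~R - (w%:~R + z%:~R) = x - w%:~R by ring.
- have [w ->] := dist_int_eq (x + z%:~R).
  have := dist_int_le x (w - z).
  by rewrite intrB; have -> : x - (w%:~R - z%:~R) = x + z%:~R - w%:~R by ring.
Qed.

Lemma md_le1 {R : realType} {n} (v : 'I_n -> nat) (t : R) : min_dist v t <= 1.
Proof. by apply/bigmin_leP; left. Qed.

Lemma md_le {R : realType} {n} (v : 'I_n -> nat) (t : R) i :
  min_dist v t <= dist_int (t * (v i)%:R).
Proof. by apply/bigmin_leP; right; exists i. Qed.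

Lemma md_ge {R : realType} {n} (v : 'I_n -> nat) (t m : R) :
  m <= 1 -> (forall i, m <= dist_int (t * (v i)%:R)) -> m <= min_dist v t.
Proof. by move=> h1 h2; apply/bigmin_geP; split. Qed.

Lemma md_gt {R : realType} {n} (v : 'I_n -> nat) (t m : R) :
  m < 1 -> (forall i, m < dist_int (t * (v i)%:R)) -> m < min_dist v t.
Proof. by move=> h1 h2; apply/bigmin_gtP; split. Qed.

Lemma md_lip {R : realType} {n} (v : 'I_n -> nat) (s t : R) :
  min_dist v s - (\sum_i (v i)%:R + 1) * `|s - t| <= min_dist v t.
Proof.
set K := \sum_i (v i)%:R.
have K0 : 0 <= K by apply: sumr_ge0 => i _; exact: ler0n.
have hst : 0 <= `|s - t| by [].
apply: md_ge.
  have := md_le1 v s; have : 0 <= (K + 1) * `|s - t| by apply: mulr_ge0; lra.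
  lra.
move=> i.
have hvi : (v i)%:R <= K by rewrite /K (bigD1 i) //= lerDl; apply: sumr_ge0 => j _; exact: ler0n.
have := dist_int_lip2 (s * (v i)%:R) (t * (v i)%:R).
have -> : s * (v i)%:R - t * (v i)%:R = (s - t) * (v i)%:R by ring.
rewrite normrM (ger0_norm (ler0n _ _)).
have := md_le v s i.
have : `|s - t| * (v i)%:R <= (K + 1) * `|s - t| by rewrite mulrC; apply: ler_wpM2r => //; lra.
move=> h1 h2 h3.
rewrite ler_norml in h3; case/andP: h3 => h3 h4.
lra.
Qed.

Lemma md_cont {R : realType} {n} (v : 'I_n -> nat) : continuous (@min_dist R n v).
Proof.
pose K : R := \sum_i (v i)%:R + 1.
have K0 : 0 < K.
  rewrite /K; have : 0 <= \sum_i ((v i)%:R : R) by apply: sumr_ge0 => i _; exact: ler0n.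
  lra.
move=> x; apply/cvgrPdist_lt => e e0.
apply/nbhs_ballP; exists (e / K); first by apply: divr_gt0.
move=> y; rewrite /ball /= => hy.
have h1 := md_lip v x y; have h2 := md_lip v y x.
rewrite distrC in h2.
have : K * `|x - y| < e.
  by rewrite mulrC -ltr_pdivlMr.
rewrite -/K in h1 h2.
move=> h3; rewrite ltr_norml; apply/andP; split; lra.
Qed.

Lemma md_shift {R : realType} {n} (v : 'I_n -> nat) (t : R) (z : int) :
  min_dist v (t + z%:~R) = min_dist v t.
Proof.
rewrite /min_dist; apply: eq_bigr => i _.
have -> : (t + z%:~R) * (v i)%:R = t * (v i)%:R + (z * (v i)%:Z)%:~R.
  by rewrite intrM; ring.
exact: dist_int_shift.
Qed.

Lemma md_max {R : realType} {n} (v : 'I_n -> nat) :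
  exists c : R, forall t, min_dist v t <= min_dist v c.
Proof.
have [c _ hc] := @EVT_max R (min_dist v) 0 1 ler01 (continuous_subspaceT (md_cont v)).
exists c => t.
rewrite -(md_shift v t (- Num.floor t)).
apply: hc; rewrite in_itv /=; apply/andP; split.
- by rewrite intrN subr_ge0 floor_le.
- rewrite intrN; have := floorD1_gt t; rewrite intrD; lra.
Qed.

Lemma ML_eq {R : realType} {n} (v : 'I_n -> nat) :
  exists c : R, ML v = min_dist v c /\ forall t, min_dist v t <= min_dist v c.
Proof.
have [c hc] := @md_max R n v; exists c; split => //.
rewrite /ML; apply/eqP; rewrite eq_le; apply/andP; split.
- apply: ge_sup; first by exists (min_dist v c), c.
  by move=> _ [t _ <-].
- apply: sup_upper_bound; last by exists c.
  split; first by exists (min_dist v c), c.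
  by exists (min_dist v c) => _ [t _ <-].
Qed.

Lemma perturb {R : realType} {n} (v : 'I_n -> nat) (c M s : R) :
  (s = 1 \/ s = -1) -> 0 < M -> M < 1/2 ->
  (forall i, (0 < v i)%N) ->
  (forall i, M <= dist_int (c * (v i)%:R)) ->
  ~ (exists i (z : int), c * (v i)%:R = z%:~R - s * M) ->
  exists d : R, M < min_dist v (c + s * d).
Proof.
move=> hs M0 M2 vpos hM nP.
have hi : forall i, exists d : R, 0 < d /\ forall e, 0 < e -> e <= d ->
    M < dist_int ((c + s * e) * (v i)%:R).
  move=> i; set x := c * (v i)%:R.
  have vi : 0 < ((v i)%:R : R) by rewrite ltr0n.
  have hsa : `|s| = 1 by case: hs => ->; rewrite ?normrN normr1.
  have [z hz] := dist_int_eq x.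
  case: (ltP M (dist_int x)) => h.
  - exists ((dist_int x - M) / (2 * (v i)%:R)); split.
      by apply: divr_gt0; lra.
    move=> e e0 ed.
    have := dist_int_lip2 x ((c + s * e) * (v i)%:R).
    have -> : x - (c + s * e) * (v i)%:R = - (s * (e * (v i)%:R)) by rewrite /x; ring.
    rewrite normrN normrM hsa mul1r ger0_norm; last by apply: mulr_ge0; lra.
    have : e * (2 * (v i)%:R) <= dist_int x - M by rewrite -ler_pdivlMr //; lra.
    move=> h1 h2; rewrite ler_norml in h2; case/andP: h2 => h2 h3.
    lra.
  - have hxM : dist_int x = M by apply/eqP; rewrite eq_le h hM.
    have hx : x = z%:~R + s * M.
      rewrite hxM in hz.
      case: (lerP 0 (x - z%:~R)) => hxz.
      + rewrite ger0_norm // in hz.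
        case: hs => hs; first by rewrite hs; lra.
        exfalso; apply: nP; exists i, z; rewrite -/x hs; lra.
      + rewrite ltr0_norm // in hz.
        case: hs => hs; last by rewrite hs; lra.
        exfalso; apply: nP; exists i, z; rewrite -/x hs; lra.
    exists ((1/2 - M) / (v i)%:R); split.
      by apply: divr_gt0; lra.
    move=> e e0 ed.
    have hev : e * (v i)%:R <= 1/2 - M by rewrite -ler_pdivlMr.
    have hev0 : 0 < e * (v i)%:R by apply: mulr_gt0.
    have -> : (c + s * e) * (v i)%:R = z%:~R + s * (M + e * (v i)%:R).
      by rewrite mulrDl -/x hx; ring.
    rewrite (@dist_int_near R _ z); have -> : z%:~R + s * (M + e * (v i)%:R) - z%:~R
        = s * (M + e * (v i)%:R) by ring.
    + rewrite normrM hsa mul1r ger0_norm; lra.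
    + rewrite normrM hsa mul1r ger0_norm; lra.
have [d hd] := fin_all_exists hi.
pose del := \big[Num.min/1]_i d i.
have del0 : 0 < del by apply/bigmin_gtP; split => // i _; case: (hd i).
have deld : forall i, del <= d i by move=> i; apply/bigmin_leP; right; exists i.
exists del; apply: md_gt; first lra.
by move=> i; case: (hd i) => _ H; apply: H.
Qed.

Theorem proposition11p3 (R : realType) (n : nat) (v : 'I_n -> nat) :
  (2 <= n)%N ->
  (forall i, (0 < v i)%N) ->
  (forall i, ((v i)%:R : R) <= 3 / 2 * n%:R + 1) ->
  ML (R:=R) v < 1 / (n.+1)%:R
  \/ (exists s : nat, (1 <= s <= 3)%N /\ ML (R:=R) v = s%:R / (n%:R * s%:R + 1) :> R)
  \/ 1 / n%:R <= (ML (R:=R) v : R).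
Proof.
move=> n2 vpos vle.
have [c [hML hc]] := @ML_eq R n v.
rewrite hML; set M := min_dist v c.
have n0 : (2 : R) <= n%:R by rewrite (ler_nat R 2).
case: (ltP M (1/(n.+1)%:R)) => h1; first by left.
case: (leP (1/n%:R) M) => h2; first by right; right.
right; left.
have hn1 : (n.+1)%:R = n%:R + 1 :> R by rewrite -natr1.
have M0 : 0 < M.
  apply: lt_le_trans h1; apply: divr_gt0; lra.
have M2 : M < 1/2.
  apply: (lt_le_trans h2); rewrite ler_pdivrMr; last lra.
  rewrite mulrC mulrA ler_pdivlMr; lra.
have hM : forall i, M <= dist_int (c * (v i)%:R) by move=> i; exact: md_le.
have P1 : exists i (z : int), c * (v i)%:R = z%:~R - 1 * M.
  case: (pselect (exists i (z : int), c * (v i)%:R = z%:~R - 1 * M)) => // nP.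
  exfalso; have [d hd] := perturb v c M 1 (or_introl erefl) M0 M2 vpos hM nP.
  have := hc (c + 1 * d); rewrite -/M; lra.
have P2 : exists i (z : int), c * (v i)%:R = z%:~R - (-1) * M.
  case: (pselect (exists i (z : int), c * (v i)%:R = z%:~R - (-1) * M)) => // nP.
  exfalso; have [d hd] := perturb v c M (-1) (or_intror erefl) M0 M2 vpos hM nP.
  have := hc (c + (-1) * d); rewrite -/M; lra.
case: P1 => i [a ha]; case: P2 => j [b hb].
rewrite mul1r in ha; rewrite mulN1r opprK in hb.
have hneq : v i <> v j.
  move=> e; rewrite e in ha.
  have hab : (a - b)%:~R = 2 * M :> R by rewrite intrB; lra.
  have : (0 : R) < (a - b)%:~R by lra.
  have : ((a - b)%:~R : R) < 1 by lra.
  rewrite ltr0z ltrz1; lia.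
have vi := vle i; have vj := vle j.
have vi' : (2 * v i <= 3 * n + 2)%N.
  rewrite -(ler_nat R) natrD !natrM; lra.
have vj' : (2 * v j <= 3 * n + 2)%N.
  rewrite -(ler_nat R) natrD !natrM; lra.
have vi0 := vpos i; have vj0 := vpos j.
have hD : (v i + v j <= 3 * n + 1)%N.
  have : (v i != v j) by apply/eqP.
  lia.
pose D := (v i + v j)%N.
pose k : int := a * (v j)%:Z - b * (v i)%:Z.
have hk : M * D%:R = k%:~R.
  rewrite /k /D intrB !intrM -!pmulrn natrD.
  have e : (a%:~R - M) * (v j)%:R = (b%:~R + M) * (v i)%:R :> R.
    by rewrite -ha -hb; ring.
  nra.
have D0 : (0 : R) < D%:R by rewrite ltr0n /D; lia.
have hk1 : (D%:R : R) <= (n.+1)%:R * k%:~R.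
  rewrite hn1 -hk.
  have : 1 <= M * (n%:R + 1).
    by rewrite -ler_pdivrMr; [rewrite -hn1 | lra].
  nra.
have hk2 : (n%:R : R) * k%:~R < D%:R.
  rewrite -hk.
  have : M * n%:R < 1.
    by rewrite -ltr_pdivlMr; lra.
  nra.
move: hk1 hk2; rewrite !pmulrn -!intrM !ler_int !ltr_int => hk1 hk2.
have hM' : M = k%:~R / D%:R by rewrite -hk mulfK //; lra.
have hk3 : (k = 1 /\ D = n.+1) \/ (k = 2 /\ (D = 2 * n + 1)%N) \/ (k = 2 /\ (D = 2 * n + 2)%N)
   \/ (k = 3 /\ (D = 3 * n + 1)%N).
  have hDn : (D <= 3 * n + 1)%N by [].
  have kpos : 0 < k by nia.
  have k3 : k <= 3 by nia.
  have : k = 1 \/ k = 2 \/ k = 3 by lia.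
  case=> [e|[e|e]]; rewrite e in hk1 hk2; lia.
rewrite hM'.
case: hk3 => [[-> ->]|[[-> ->]|[[-> ->]|[-> ->]]]].
- exists 1%N; split => //; rewrite hn1 mulr1; done.
- exists 2%N; split => //; rewrite natrD natrM; congr (_ / _); ring.
- exists 1%N; split => //; rewrite natrD natrM mulr1.
  have h0 : (n%:R + 1 : R) != 0 by lra.
  apply/eqP; rewrite eqr_div //; last by lra.
  apply/eqP; ring.
- exists 3%N; split => //; rewrite natrD natrM; congr (_ / _); ring.
Qed.
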